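(* Let $x_1,\dots,x_N$ be observed data points and consider the mixture model with $K$ components $$p(x_n\mid \mathbf{p}_n;\mathbf{a})=\sum_{k=1}^K p_{n,k}\,\pi_k(x_n;a_k),$$ where $\mathbf{p}_n=(p_{n,1},\dots,p_{n,K})\in\Delta^K$ are sample-dependent mixing probabilities, $\pi_k(\cdot;a_k)$ are component densities with parameters $\mathbf{a}=(a_1,\dots,a_K)$, and $\boldsymbol\theta=((\mathbf{p}_n)_n,\mathbf{a})$. Complete each sample with a latent class $C_n\in\{1,\dots,K\}$ and a vector $\mathbf{B}_n\in\mathbb{R}^K$ serving as the parameter of a Dirichlet prior on $\mathbf{p}_n$, so that the completed log-posterior is $$\ell(\boldsymbol\theta;(x_n,C_n,\mathbf{B}_n)_n)=\sum_{n=1}^N\ln \mathrm{Dir}(\mathbf{p}_n\mid\mathbf{B}_n)+\sum_{n=1}^N\sum_{k=1}^K\delta_k^{C_n}\big[\ln p_{n,k}+\ln\pi_k(x_n;a_k)\big],$$ with $\mathrm{Dir}(\mathbf{p}\mid\mathbf{b})=\frac{\Gamma(\sum_k b_k)}{\prod_k\Gamma(b_k)}\prod_k p_k^{b_k-1}$. For all $(n,k)\in\{1,\dots,N\}\times\{1,\dots,K\}$, let $f_{n,k}:\mathbb{R}^N\to\mathbb{R}$ be any linear function such that $f_{n,k}([0,+\infty[^N)\subset\mathbb{R}_+$, and set $$\mathbf{B}_n=\big(f_{n,1}(\delta_1^{C_\cdot})-\delta_1^{C_n}+1,\dots,f_{n,K}(\delta_K^{C_\cdot})-\delta_K^{C_n}+1\big),$$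 where $\delta_k^{C_\cdot}=(\delta_k^{C_1},\dots,\delta_k^{C_N})\in\mathbb{R}^N$. Then, in the EM algorithm (E-step: take the conditional expectation of $\ell$ given the data $(x_n)_n$ and the previous estimate $\boldsymbol\theta^{(t)}$; M-step: maximize it over $\boldsymbol\theta$ subject to $\mathbf{p}_n\in\Delta^K$), the mixing probability updates are $$\forall (n,k),\quad p_{n,k}^{(t+1)}=\frac{f_{n,k}(\tau_{\cdot,k}^{(t)})}{\sum_{k'=1}^K f_{n,k'}(\tau_{\cdot,k'}^{(t)})},$$ where $\tau_{n,k}^{(t)}=P(C_n=k\mid x_n,\boldsymbol\theta^{(t)})$ is the posterior probability of component $k$ for sample $x_n$ at the previous E-step and $\tau_{\cdot,k}^{(t)}=(\tau_{1,k}^{(t)},\dots,\tau_{N,k}^{(t)})$.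
   Context: $\Delta^K$ denotes the $K$-dimensional probability simplex. $\delta_i^j$ is the Kronecker symbol. The posterior at step $t$ is $\tau_{n,k}^{(t)}=p_{n,k}^{(t)}\pi_k(x_n;a_k^{(t)})/\sum_{j}p_{n,j}^{(t)}\pi_j(x_n;a_j^{(t)})$. *)

(* Defs.v *)
From mathcomp Require Import all_boot all_order all_algebra.
From mathcomp Require Import all_classical all_reals all_analysis.
Set Implicit Arguments. Unset Strict Implicit. Unset Printing Implicit Defensive.
Import Order.TTheory GRing.Theory Num.Theory.
Local Open Scope ring_scope.
Local Open Scope classical_set_scope.

Section EMDefs.
Variable R : realType.

(* Euler Gamma function Gamma(x) = int_0^oo t^(x-1) e^(-t) dt
   (Lebesgue integral; only meaningful for x > 0). *)
Definition Gamma (x : R) : R :=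
  Rintegral (@lebesgue_measure R) `]0, +oo[%classic
    (fun t => t `^ (x - 1) * expR (- t)).

Definition in_simplex (K : nat) (q : 'I_K -> R) : Prop :=
  (forall k, 0 <= q k) /\ \sum_(k < K) q k = 1.

(* Open simplex (all coordinates positive): the domain where ln p_k and the
   Dirichlet log-density are defined. *)
Definition in_open_simplex (K : nat) (q : 'I_K -> R) : Prop :=
  (forall k, 0 < q k) /\ \sum_(k < K) q k = 1.

Definition lnDir (K : nat) (b q : 'I_K -> R) : R :=
  ln (Gamma (\sum_(k < K) b k)) - \sum_(k < K) ln (Gamma (b k))
  + \sum_(k < K) (b k - 1) * ln (q k).

Definition delta_row (N K : nat) (C : 'I_N -> 'I_K) (k : 'I_K) : 'rV[R]_N :=
  \row_(i < N) (C i == k)%:R.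

Definition Bvec (N K : nat) (f : 'I_N -> 'I_K -> 'rV[R]_N -> R^o)
  (C : 'I_N -> 'I_K) (n : 'I_N) : 'I_K -> R :=
  fun k => f n k (delta_row C k) - (C n == k)%:R + 1.

Definition complete_logpost (X A : Type) (N K : nat)
  (pi : 'I_K -> X -> A -> R) (f : 'I_N -> 'I_K -> 'rV[R]_N -> R^o)
  (x : 'I_N -> X) (p : 'I_N -> 'I_K -> R) (a : 'I_K -> A)
  (C : 'I_N -> 'I_K) : R :=
  \sum_(n < N) lnDir (Bvec f C n) (p n)
  + \sum_(n < N) \sum_(k < K)
      (C n == k)%:R * (ln (p n k) + ln (pi k (x n) (a k))).

Definition tau (X A : Type) (N K : nat) (pi : 'I_K -> X -> A -> R)
  (x : 'I_N -> X) (p : 'I_N -> 'I_K -> R) (a : 'I_K -> A)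
  (n : 'I_N) (k : 'I_K) : R :=
  p n k * pi k (x n) (a k) / \sum_(j < K) p n j * pi j (x n) (a j).

Definition tau_row (X A : Type) (N K : nat) (pi : 'I_K -> X -> A -> R)
  (x : 'I_N -> X) (p : 'I_N -> 'I_K -> R) (a : 'I_K -> A) (k : 'I_K)
  : 'rV[R]_N :=
  \row_(n < N) tau pi x p a n k.

(* E-step: conditional expectation of l(theta; .) given the data and the
   previous estimate theta^(t) = (pt, at); given these, the latent classes
   C_1..C_N are independent with P(C_n = k | x_n, theta^(t)) = tau_{n,k}. *)
Definition Qfun (X A : Type) (N K : nat) (pi : 'I_K -> X -> A -> R)
  (f : 'I_N -> 'I_K -> 'rV[R]_N -> R^o) (x : 'I_N -> X)
  (pt : 'I_N -> 'I_K -> R) (at_ : 'I_K -> A)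
  (p : 'I_N -> 'I_K -> R) (a : 'I_K -> A) : R :=
  \sum_(C : {ffun 'I_N -> 'I_K})
    (\prod_(n < N) tau pi x pt at_ n (C n)) * complete_logpost pi f x p a C.

End EMDefs.

(* Main.v *)
Require Import Defs.
From mathcomp Require Import all_boot all_order all_algebra.
From mathcomp Require Import all_classical all_reals all_analysis.
From mathcomp Require Import ring lra.
Import Order.TTheory GRing.Theory Num.Theory.
Local Open Scope ring_scope.

Lemma expect_delta (R : realType) (N K : nat) (t : 'I_N -> 'I_K -> R)
  (ht : forall n, \sum_(k < K) t n k = 1) (i : 'I_N) (k : 'I_K) :
  \sum_(C : {ffun 'I_N -> 'I_K}) (\prod_(n < N) t n (C n)) * (C i == k)%:R = t i k.
Proof.
pose G (n : 'I_N) (j : 'I_K) : R := t n j * (if n == i then (j == k)%:R else 1).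
have -> : \sum_(C : {ffun 'I_N -> 'I_K}) (\prod_(n < N) t n (C n)) * (C i == k)%:R
   = \sum_(C : {ffun 'I_N -> 'I_K}) \prod_(n < N) G n (C n).
  apply: eq_bigr => C _; rewrite /G big_split /=; congr (_ * _).
  rewrite (bigD1 i) //= big1 ?mulr1; last by move=> n /negPf ->.
  by rewrite eqxx.
rewrite -(bigA_distr_bigA G) (bigD1 i) //=.
rewrite [X in X * _](bigD1 k) //= big1 ?addr0; last first.
  by move=> j /negPf jk; rewrite /G eqxx jk mulr0.
rewrite [X in _ * X]big1 ?mulr1; last first.
  move=> n /negPf nei; rewrite /G nei -[RHS](ht n); apply: eq_bigr => j _.
  by rewrite mulr1.
by rewrite /G; case: eqP => // _; case: eqP => // _; rewrite mulr1.
Qed.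

Lemma tau_sum1 (R : realType) (X A : Type) (N K : nat)
  (x : 'I_N -> X) (pi : 'I_K -> X -> A -> R)
  (pt : 'I_N -> 'I_K -> R) (at_ : 'I_K -> A) n :
  (forall k y a, 0 < pi k y a) -> in_simplex (pt n) ->
  \sum_(k < K) tau pi x pt at_ n k = 1.
Proof.
move=> hpi [hp1 hp2]; rewrite /tau -mulr_suml divff //.
apply/eqP => h0.
have hz : forall j, pt n j * pi j (x n) (at_ j) = 0.
  move=> j; apply: (psumr_eq0P _ h0) => // l _.
  by rewrite mulr_ge0 // ltW.
move: hp2; rewrite big1 => [/eqP|j _]; first by rewrite eq_sym oner_eq0.
by have := hz j; move/eqP; rewrite mulf_eq0 (gt_eqF (hpi _ _ _)) orbF => /eqP.
Qed.

Lemma ln_eq_sub1 (R : realType) (y : R) : 0 < y -> ln y = y - 1 -> y = 1.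
Proof.
move=> y0 h.
set s := Num.sqrt y.
have s0 : 0 < s by rewrite sqrtr_gt0.
have ys : y = s * s by rewrite -expr2 sqr_sqrtr // ltW.
have hl : ln y = ln s + ln s by rewrite ys lnM // posrE.
have hs : ln s <= s - 1.
  have := @le_ln1Dx R (s - 1); rewrite [1 + _]addrC subrK; apply; lra.
have h2 : y - 1 <= 2 * (s - 1) by rewrite -h hl; lra.
have : s = 1 by rewrite ys in h2; nra.
by rewrite ys => ->; rewrite mulr1.
Qed.
Lemma lin_sum (R : realType) (N : nat) (f : 'rV[R]_N -> R^o) (hf : linear f)
  (I : finType) (w : I -> R) (v : I -> 'rV[R]_N) :
  f (\sum_i w i *: v i) = \sum_i w i * f (v i).
Proof.
have f0 : f 0 = 0.
  have h := hf 1 0 0; rewrite scale1r addr0 scale1r in h.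
  have h2 : (f 0 : R) = f 0 + f 0 := h.
  lra.
have fadd : {morph f : u v / u + v}.
  by move=> u1 u2; have := hf 1 u1 u2; rewrite !scale1r.
rewrite (big_morph f fadd f0); apply: eq_bigr => i _.
by have := hf (w i) (v i) 0; rewrite !addr0 f0 addr0.
Qed.

Lemma logpost_split (R : realType) (X A : Type) (N K : nat)
  (x : 'I_N -> X) (pi : 'I_K -> X -> A -> R)
  (f : 'I_N -> 'I_K -> 'rV[R]_N -> R^o) (p : 'I_N -> 'I_K -> R) (a : 'I_K -> A)
  (C : 'I_N -> 'I_K) :
  complete_logpost pi f x p a C =
  (\sum_(n < N) (ln (Gamma (\sum_(k < K) Bvec f C n k))
                 - \sum_(k < K) ln (Gamma (Bvec f C n k)))
   + \sum_(n < N) \sum_(k < K) (C n == k)%:R * ln (pi k (x n) (a k)))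
  + \sum_(n < N) \sum_(k < K) f n k (delta_row R C k) * ln (p n k).
Proof.
rewrite /complete_logpost /lnDir big_split /= -!addrA; congr (_ + _).
rewrite -!big_split; apply: eq_bigr => n _; rewrite -!big_split.
apply: eq_bigr => k _; rewrite /Bvec /=; ring.
Qed.

Lemma Q_decomp (R : realType) (X A : Type) (N K : nat)
  (x : 'I_N -> X) (pi : 'I_K -> X -> A -> R)
  (f : 'I_N -> 'I_K -> 'rV[R]_N -> R^o)
  (pt : 'I_N -> 'I_K -> R) (at_ : 'I_K -> A)
  (hf : forall n k, linear (f n k))
  (ht : forall n, \sum_(k < K) tau pi x pt at_ n k = 1)
  (p : 'I_N -> 'I_K -> R) (a : 'I_K -> A) :
  Qfun pi f x pt at_ p a =
  \sum_(C : {ffun 'I_N -> 'I_K}) (\prod_(n < N) tau pi x pt at_ n (C n)) *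
  (\sum_(n < N) (ln (Gamma (\sum_(k < K) Bvec f C n k))
                 - \sum_(k < K) ln (Gamma (Bvec f C n k)))
   + \sum_(n < N) \sum_(k < K) (C n == k)%:R * ln (pi k (x n) (a k)))
  + \sum_(n < N) \sum_(k < K) f n k (tau_row pi x pt at_ k) * ln (p n k).
Proof.
rewrite /Qfun.
under eq_bigr do rewrite logpost_split mulrDr.
rewrite big_split /=; congr (_ + _).
under eq_bigr do rewrite mulr_sumr.
rewrite exchange_big; apply: eq_bigr => n _.
under eq_bigr do rewrite mulr_sumr.
rewrite exchange_big; apply: eq_bigr => k _.
under eq_bigr do rewrite mulrA.
rewrite -mulr_suml; congr (_ * _).
rewrite -lin_sum //; congr (f n k _).
apply/rowP => i; rewrite summxE !mxE.
under eq_bigr do rewrite !mxE.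
exact: expect_delta.
Qed.

Theorem proposition1 (R : realType) (X A : Type) (N K : nat)
  (x : 'I_N -> X) (pi : 'I_K -> X -> A -> R)
  (f : 'I_N -> 'I_K -> 'rV[R]_N -> R^o)
  (pt : 'I_N -> 'I_K -> R) (at_ : 'I_K -> A) :
  (forall k y a, 0 < pi k y a) ->
  (forall n k, linear (f n k)) ->
  (forall n k (v : 'rV[R]_N), (forall i, 0 <= v ord0 i) -> 0 <= f n k v) ->
  (forall n, in_simplex (pt n)) ->
  (forall n, \sum_(k < K) f n k (tau_row pi x pt at_ k) != 0) ->
  forall (pstar : 'I_N -> 'I_K -> R) (astar : 'I_K -> A),
    (forall n, in_open_simplex (pstar n)) ->
    (forall (p : 'I_N -> 'I_K -> R) (a : 'I_K -> A),
        (forall n, in_open_simplex (p n)) ->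
        Qfun pi f x pt at_ p a <= Qfun pi f x pt at_ pstar astar) ->
    forall n k,
      pstar n k = f n k (tau_row pi x pt at_ k)
                  / \sum_(k' < K) f n k' (tau_row pi x pt at_ k').
Proof.
move=> hpi hf hfpos hpt hS pstar astar hps hmax n0 k0.
have ht : forall n, \sum_(k < K) tau pi x pt at_ n k = 1.
  by move=> n; apply: tau_sum1.
pose F n k := f n k (tau_row pi x pt at_ k).
have Fge0 : forall n k, 0 <= F n k.
  move=> n k; apply: hfpos => i; rewrite mxE /tau.
  have [hp1 _] := hpt i.
  apply: divr_ge0; first by rewrite mulr_ge0 // ltW.
  by apply: sumr_ge0 => j _; rewrite mulr_ge0 // ltW.
pose S n := \sum_(k < K) F n k.
have S0 : forall n, 0 < S n.
  by move=> n; rewrite lt_def hS /=; apply: sumr_ge0 => k _.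
pose r n k := F n k / S n.
have rge0 : forall n k, 0 <= r n k by move=> n k; rewrite divr_ge0 // ltW.
have rgt0 : forall n k, F n k != 0 -> 0 < r n k.
  by move=> n k hF; rewrite divr_gt0 // lt_def hF Fge0.
have rsum : forall n, \sum_(k < K) r n k = 1.
  by move=> n; rewrite /r -mulr_suml -/(S n) divff // (gt_eqF (S0 n)).
pose q n k := (pstar n k + r n k) / 2.
have qgt0 : forall n k, 0 < q n k.
  move=> n k; have [hp _] := hps n; apply: divr_gt0 => //.
  by apply: (lt_le_trans (hp k)); rewrite lerDl.
have hq : forall n, in_open_simplex (q n).
  move=> n; split => //; rewrite -mulr_suml big_split /= rsum (hps n).2.
  by rewrite divff // pnatr_eq0.
have hH : \sum_(n < N) \sum_(k < K) F n k * ln (q n k)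
          <= \sum_(n < N) \sum_(k < K) F n k * ln (pstar n k).
  have := hmax q astar hq.
  by rewrite !(@Q_decomp _ _ _ _ _ _ _ _ _ _ hf ht) lerD2l.
have conc : forall n k, F n k * ln (pstar n k) + F n k * ln (r n k)
                        <= 2 * (F n k * ln (q n k)).
  move=> n k; have [F0|F0] := eqVneq (F n k) 0.
    by rewrite F0 !mul0r mulr0 addr0.
  have r0 := rgt0 n k F0; have p0 := (hps n).1 k.
  rewrite -mulrDr mulrCA; apply: ler_wpM2l; first exact: Fge0.
  have q0 := qgt0 n k.
  rewrite -lnM ?posrE // mulr_natl -lnXn // ler_ln ?posrE; last 2 first.
  - exact: mulr_gt0.
  - exact: exprn_gt0.
  rewrite /q -subr_ge0.
  have -> : ((pstar n k + r n k) / 2) ^+ 2 - pstar n k * r n k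
            = (pstar n k - r n k) ^+ 2 / 4 by field.
  by rewrite divr_ge0 ?sqr_ge0.
pose Hp := \sum_(n < N) \sum_(k < K) F n k * ln (pstar n k).
pose Hr := \sum_(n < N) \sum_(k < K) F n k * ln (r n k).
pose Hq := \sum_(n < N) \sum_(k < K) F n k * ln (q n k).
have c2 : Hp + Hr <= 2 * Hq.
  rewrite /Hp /Hr /Hq -big_split mulr_sumr /=; apply: ler_sum => n _.
  rewrite -big_split mulr_sumr /=; apply: ler_sum => k _; exact: conc.
have hge : 0 <= \sum_(n < N) \sum_(k < K) F n k * (ln (pstar n k) - ln (r n k)).
  have -> : \sum_(n < N) \sum_(k < K) F n k * (ln (pstar n k) - ln (r n k))
            = Hp - Hr.
    rewrite /Hp /Hr -sumrB; apply: eq_bigr => n _.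
    rewrite -sumrB; apply: eq_bigr => k _; by rewrite mulrBr.
  have : Hq <= Hp := hH.
  lra.
pose s n k := S n * pstar n k - F n k - F n k * (ln (pstar n k) - ln (r n k)).
have sge0 : forall n k, 0 <= s n k.
  move=> n k; rewrite /s; have [F0|F0] := eqVneq (F n k) 0.
    by rewrite F0 !mul0r subr0 subr0 mulr_ge0 // ltW // ((hps n).1 k).
  have r0 := rgt0 n k F0; have p0 := (hps n).1 k.
  have y0 : 0 < pstar n k / r n k by rewrite divr_gt0.
  rewrite -ln_div ?posrE //.
  have hl := @le_ln1Dx R (pstar n k / r n k - 1).
  rewrite [1 + _]addrC subrK in hl.
  have hl2 := hl (ltac:(lra)).
  have e : S n * pstar n k = F n k * (pstar n k / r n k).
    by rewrite /r; field; rewrite F0 gt_eqF.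
  rewrite e.
  have := Fge0 n k.
  nra.
have ssum : \sum_(n < N) \sum_(k < K) s n k
            = - \sum_(n < N) \sum_(k < K) F n k * (ln (pstar n k) - ln (r n k)).
  rewrite -sumrN; apply: eq_bigr => n _.
  rewrite /s !sumrB -mulr_sumr (hps n).2 mulr1 -/(S n) subrr sub0r //.
have s0 : \sum_(n < N) \sum_(k < K) s n k = 0.
  apply: le_anti; apply/andP; split; first by rewrite ssum oppr_le0.
  by apply: sumr_ge0 => n _; apply: sumr_ge0 => k _.
have s1 : \sum_(k < K) s n0 k = 0.
  apply: (psumr_eq0P _ s0) => // n _; apply: sumr_ge0 => k _; exact: sge0.
have s2 : s n0 k0 = 0.
  apply: (psumr_eq0P _ s1) => // k _; exact: sge0.
rewrite -/(F n0 k0) -/(S n0) -/(r n0 k0).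
move: s2; rewrite /s; have [F0|F0] := eqVneq (F n0 k0) 0.
  rewrite /r F0 !mul0r !subr0 => /eqP; rewrite mulf_eq0 (gt_eqF (S0 n0)) /=.
  by move/eqP.
have r0 := rgt0 n0 k0 F0; have p0 := (hps n0).1 k0.
have y0 : 0 < pstar n0 k0 / r n0 k0 by rewrite divr_gt0.
have e : S n0 * pstar n0 k0 = F n0 k0 * (pstar n0 k0 / r n0 k0).
  by rewrite /r; field; rewrite F0 gt_eqF.
rewrite e -ln_div ?posrE // => h.
have h2 : ln (pstar n0 k0 / r n0 k0) = pstar n0 k0 / r n0 k0 - 1.
  apply: (mulfI F0); rewrite mulrBr mulr1; lra.
have := ln_eq_sub1 _ _ y0 h2.
move=> hy; by rewrite -[LHS](divfK (lt0r_neq0 r0)) hy mul1r.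
Qed.
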